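(* Let $n\ge 3$ and let $v_1<\cdots<v_{n-1}$ be positive integers with $\mathrm{ML}(v_1,\ldots,v_{n-1})=L>\frac1n$. Then $\mathrm{ML}(v_1,\ldots,v_n)\ge\frac1n$ for every positive integer $v_n$ with $v_n\ge v_{n-1}(2v_{n-1}-1)$.
   Context: For a real number $x$, $\Vert x\Vert$ denotes the distance from $x$ to the nearest integer. For positive integers $v_1,\ldots,v_k$, the maximum loneliness is $\mathrm{ML}(v_1,\ldots,v_k)=\max_{t\in\mathbb{R}}\min_{1\le i\le k}\Vert t v_i\Vert$. *)

(* Defs.v *)
From Stdlib Require Import Reals List.
From Coquelicot Require Import Coquelicot.
Import ListNotations.
Open Scope R_scope.

Definition dist_int (x : R) : R :=
  Rmin (x - IZR (Int_part x)) (IZR (Int_part x) + 1 - x).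

(* min_{i} ||t v_i|| for a (nonempty) list of speeds vs;
   1 acts as neutral element since ||.|| <= 1/2. *)
Definition min_dist (vs : list nat) (t : R) : R :=
  fold_right (fun v acc => Rmin (dist_int (t * INR v)) acc) 1 vs.

(* ML(v_1,...,v_k) = max_t min_i ||t v_i||, taken as the supremum
   (it is attained, being a max of a continuous periodic function). *)
Definition ML (vs : list nat) : R :=
  real (Lub_Rbar (fun r => exists t : R, r = min_dist vs t)).

(* Main.v *)
Require Import Defs.
From Stdlib Require Import Reals List Lra Lia Psatz ZArith Classical.
From Coquelicot Require Import Coquelicot.
Import ListNotations.
Open Scope R_scope.

Lemma min_dist_le1 vs t : min_dist vs t <= 1.
Proof.
  induction vs as [|a vs IH]; simpl; [lra|].
  eapply Rle_trans; [apply Rmin_r|exact IH].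
Qed.

Lemma ML_ge vs t : ML vs >= min_dist vs t.
Proof.
  unfold ML.
  destruct (Lub_Rbar_correct (fun r => exists t : R, r = min_dist vs t)) as [Hub Hl].
  assert (H1 := Hub (min_dist vs t) (ex_intro _ t eq_refl)).
  assert (H2 : Rbar_le (Lub_Rbar (fun r => exists t : R, r = min_dist vs t)) (Finite 1)).
  { apply Hl. intros x [s ->]. simpl. apply min_dist_le1. }
  destruct (Lub_Rbar _); simpl in *; try contradiction; lra.
Qed.

Lemma ML_gt vs c : ML vs > c -> exists t, min_dist vs t > c.
Proof.
  intro H. apply NNPP. intro Hn.
  assert (Hall : forall t, min_dist vs t <= c).
  { intro t. apply Rnot_lt_le. intro. apply Hn. exists t. lra. }
  unfold ML in H.
  destruct (Lub_Rbar_correct (fun r => exists t : R, r = min_dist vs t)) as [Hub Hl].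
  assert (H2 : Rbar_le (Lub_Rbar (fun r => exists t : R, r = min_dist vs t)) (Finite c)).
  { apply Hl. intros x [s ->]. simpl. apply Hall. }
  assert (H1 := Hub (min_dist vs 0) (ex_intro _ 0 eq_refl)).
  destruct (Lub_Rbar _); simpl in *; try contradiction; lra.
Qed.

Lemma min_dist_gt vs t c : min_dist vs t > c -> forall x, In x vs -> dist_int (t * INR x) > c.
Proof.
  induction vs as [|a vs IH]; simpl; intros H x Hx; [contradiction|].
  unfold Rmin in H. destruct (Rle_dec (dist_int (t * INR a)) (min_dist vs t)).
  - destruct Hx as [<-|Hx]; [lra|]. apply IH; auto; lra.
  - destruct Hx as [<-|Hx]; [lra|]. apply IH; auto; lra.
Qed.

Lemma min_dist_ge vs t c : c <= 1 -> (forall x, In x vs -> dist_int (t * INR x) >= c) -> min_dist vs t >= c.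
Proof.
  intro Hc; induction vs as [|a vs IH]; simpl; intros H; [lra|].
  unfold Rmin. destruct (Rle_dec _ _).
  - apply H; auto.
  - apply IH; auto.
Qed.

Lemma Int_part_eq (k : Z) x : IZR k <= x < IZR k + 1 -> Int_part x = k.
Proof.
  intros [H1 H2]. unfold Int_part.
  assert (E : (k + 1)%Z = up x).
  { apply tech_up; rewrite plus_IZR; lra. }
  lia.
Qed.

Lemma dist_ge (k : Z) x c : 0 < c -> IZR k + c <= x <= IZR k + 1 - c -> dist_int x >= c.
Proof.
  intros Hc [H1 H2]. unfold dist_int.
  rewrite (Int_part_eq k x) by lra.
  unfold Rmin; destruct (Rle_dec _ _); lra.
Qed.

Lemma dist_gt_split x c : dist_int x > c -> IZR (Int_part x) + c < x /\ x < IZR (Int_part x) + 1 - c.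
Proof.
  unfold dist_int, Rmin. destruct (Rle_dec _ _); lra.
Qed.

Lemma divle a b N : 0 < N -> a <= b -> a / N <= b / N.
Proof. intros. apply Rmult_le_compat_r; [apply Rlt_le, Rinv_0_lt_compat|]; lra. Qed.

Lemma select A N c : 0 < N -> 0 < c -> 2 * c <= 1 ->
  exists t, A <= t <= A + 2 * c / N /\ dist_int (t * N) >= c.
Proof.
  intros HN Hc Hc2.
  set (y := A * N). set (k := Int_part y).
  destruct (base_Int_part y) as [B1 B2]. fold k in B1, B2.
  assert (HA : A = y / N) by (unfold y; field; lra).
  destruct (Rlt_dec (y - IZR k) c) as [Hlt|Hnlt].
  - exists ((IZR k + c) / N). split.
    + rewrite HA. replace (y / N + 2 * c / N) with ((y + 2 * c) / N) by (field; lra).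
      split; apply divle; lra.
    + apply (dist_ge k); [lra|]. replace ((IZR k + c) / N * N) with (IZR k + c) by (field; lra). lra.
  - destruct (Rgt_dec (y - IZR k) (1 - c)) as [Hgt|Hngt].
    + exists ((IZR k + 1 + c) / N). split.
      * rewrite HA. replace (y / N + 2 * c / N) with ((y + 2 * c) / N) by (field; lra).
        split; apply divle; lra.
      * apply (dist_ge (k+1)); [lra|]. rewrite plus_IZR.
        replace ((IZR k + 1 + c) / N * N) with (IZR k + 1 + c) by (field; lra). lra.
    + exists A. split.
      * assert (0 <= 2 * c / N) by (apply Rmult_le_pos; [lra|apply Rlt_le, Rinv_0_lt_compat; lra]). lra.
      * apply (dist_ge k); [lra|]. fold y. lra.
Qed.

Lemma list_argmax (f : nat -> R) (l : list nat) : l <> [] ->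
  exists x, In x l /\ forall y, In y l -> f y <= f x.
Proof.
  induction l as [|a l IH]; intro H; [congruence|].
  destruct l as [|b l'].
  - exists a. split; [left; auto|]. intros y [<-|[]]; lra.
  - destruct IH as [x [Hx Hmax]]; [discriminate|].
    destruct (Rle_dec (f a) (f x)).
    + exists x. split; [right; auto|]. intros y [<-|Hy]; auto.
    + exists a. split; [left; auto|]. intros y [<-|Hy]; [lra|]. specialize (Hmax y Hy). lra.
Qed.

Lemma pair_gap (n x y N : nat) (kx ky : Z) (t0 : R) :
 (3 <= n)%nat -> (0<x)%nat -> (0<y)%nat ->
 (x <> y -> 2*x*y <= N)%nat -> (2*x <= N)%nat -> (0<N)%nat ->
 IZR kx + 1 / INR n < t0 * INR x -> t0 * INR y < IZR ky + 1 - 1 / INR n ->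
 (IZR ky + 1 - 1 / INR n)/INR y - (IZR kx + 1 / INR n)/INR x >= 2*(1 / INR n)/INR N.
Proof.
  intros Hn Hx Hy HN1 HN2 HN0 H1 H2.
  rewrite !INR_IZR_INZ in *.
  set (nz := Z.of_nat n) in *. set (xz := Z.of_nat x) in *.
  set (yz := Z.of_nat y) in *. set (Nz := Z.of_nat N) in *.
  assert (Znx : (3 <= nz)%Z) by lia. assert (Zx : (0 < xz)%Z) by lia.
  assert (Zy : (0 < yz)%Z) by lia. assert (ZN : (0 < Nz)%Z) by lia.
  assert (ZN1 : xz <> yz -> (2*xz*yz <= Nz)%Z) by lia.
  assert (ZN2 : (2*xz <= Nz)%Z) by lia.
  clearbody nz xz yz Nz.
  assert (Rn : 3 <= IZR nz) by (apply IZR_le; lia).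
  assert (Rx : 0 < IZR xz) by (apply IZR_lt; lia).
  assert (Ry : 0 < IZR yz) by (apply IZR_lt; lia).
  assert (RN : 0 < IZR Nz) by (apply IZR_lt; lia).
  set (c := 1 / IZR nz) in *.
  assert (Hc : c * IZR nz = 1) by (unfold c; field; lra).
  assert (Hc0 : 0 < c) by (unfold c; apply Rdiv_lt_0_compat; lra).
  assert (A1 : t0 * IZR yz * IZR xz < (IZR ky + 1 - c) * IZR xz) by (apply Rmult_lt_compat_r; lra).
  assert (A2 : (IZR kx + c) * IZR yz < t0 * IZR xz * IZR yz) by (apply Rmult_lt_compat_r; lra).
  assert (A3 : IZR xz * (IZR ky + 1) - IZR yz * IZR kx - c * (IZR xz + IZR yz) > 0) by nra.
  assert (A4 : IZR nz * (IZR xz * (IZR ky + 1) - IZR yz * IZR kx - c * (IZR xz + IZR yz)) > 0)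
    by (apply Rmult_lt_0_compat; lra).
  set (J := (nz * (xz * (ky + 1) - yz * kx) - xz - yz)%Z).
  assert (EJ : IZR J = IZR nz * (IZR xz * (IZR ky + 1) - IZR yz * IZR kx - c * (IZR xz + IZR yz))).
  { unfold J. rewrite !minus_IZR, !mult_IZR, !minus_IZR, !mult_IZR, plus_IZR.
    replace (IZR nz * (IZR xz * (IZR ky + 1) - IZR yz * IZR kx - c * (IZR xz + IZR yz)))
      with (IZR nz * (IZR xz * (IZR ky + 1) - IZR yz * IZR kx) - (c * IZR nz) * (IZR xz + IZR yz)) by ring.
    rewrite Hc. ring. }
  assert (ZJ : (0 < J)%Z) by (apply lt_IZR; lra).
  assert (ZK : (2 * xz * yz <= Nz * J)%Z).
  { destruct (Z.eq_dec xz yz) as [E|E].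
    - assert (J = xz * (nz * (ky + 1 - kx) - 2))%Z by (unfold J; rewrite <- E; ring).
      assert (0 < nz * (ky + 1 - kx) - 2)%Z by nia. nia.
    - specialize (ZN1 E). nia. }
  apply IZR_le in ZK. rewrite !mult_IZR in ZK.
  assert (E : (IZR ky + 1 - c) / IZR yz - (IZR kx + c) / IZR xz - 2 * c / IZR Nz
     = (IZR Nz * IZR J - 2 * IZR xz * IZR yz) / (IZR nz * IZR xz * IZR yz * IZR Nz)).
  { rewrite EJ. unfold c. field. repeat split; lra. }
  assert (0 <= (IZR Nz * IZR J - 2 * IZR xz * IZR yz) / (IZR nz * IZR xz * IZR yz * IZR Nz)).
  { apply Rmult_le_pos; [lra|]. apply Rlt_le, Rinv_0_lt_compat.
    repeat apply Rmult_lt_0_compat; lra. }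
  lra.
Qed.

Lemma core (ws : list nat) (n N : nat) (t0 : R) :
 (3 <= n)%nat -> ws <> [] -> (forall x, In x ws -> (0 < x)%nat) ->
 (forall x y, In x ws -> In y ws -> x <> y -> (2*x*y <= N)%nat) ->
 (forall x, In x ws -> (2*x <= N)%nat) -> (0 < N)%nat ->
 (forall x, In x ws -> dist_int (t0 * INR x) > 1 / INR n) ->
 exists t, (forall x, In x ws -> dist_int (t * INR x) >= 1 / INR n) /\ dist_int (t * INR N) >= 1 / INR n.
Proof.
  intros Hn Hne Hpos Hp1 Hp2 HN Hd.
  assert (Rn : 3 <= INR n) by (apply le_INR in Hn; simpl in Hn; lra).
  set (c := 1 / INR n) in *.
  assert (Hc0 : 0 < c) by (unfold c; apply Rdiv_lt_0_compat; lra).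
  assert (Hc2 : 2 * c <= 1) by (unfold c; apply Rmult_le_reg_r with (INR n); [lra|];
     field_simplify; lra).
  set (a := fun x : nat => (IZR (Int_part (t0 * INR x)) + c) / INR x).
  destruct (list_argmax a ws Hne) as [xs [Hxs Hmax]].
  assert (RN : 0 < INR N) by (apply lt_0_INR; lia).
  destruct (select (a xs) (INR N) c RN Hc0 Hc2) as [t [[Ht1 Ht2] HtN]].
  exists t. split; [|exact HtN].
  intros y Hy.
  assert (Ry : 0 < INR y) by (apply lt_0_INR; apply Hpos; auto).
  destruct (dist_gt_split _ _ (Hd y Hy)) as [Y1 Y2].
  destruct (dist_gt_split _ _ (Hd xs Hxs)) as [X1 X2].
  assert (G := pair_gap n xs y N (Int_part (t0 * INR xs)) (Int_part (t0 * INR y)) t0 Hn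
     (Hpos xs Hxs) (Hpos y Hy) (Hp1 xs y Hxs Hy) (Hp2 xs Hxs) HN X1 Y2).
  fold c in G. fold (a xs) in G.
  assert (L1 : a y <= t) by (specialize (Hmax y Hy); lra).
  assert (L2 : t <= (IZR (Int_part (t0 * INR y)) + 1 - c) / INR y) by lra.
  apply (dist_ge (Int_part (t0 * INR y))); [lra|]. split.
  - unfold a in L1. apply Rmult_le_compat_r with (r := INR y) in L1; [|lra].
    replace ((IZR (Int_part (t0 * INR y)) + c) / INR y * INR y) with (IZR (Int_part (t0 * INR y)) + c) in L1 by (field; lra).
    lra.
  - apply Rmult_le_compat_r with (r := INR y) in L2; [|lra].
    replace ((IZR (Int_part (t0 * INR y)) + 1 - c) / INR y * INR y) with (IZR (Int_part (t0 * INR y)) + 1 - c) in L2 by (field; lra).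
    lra.
Qed.

Theorem lemma8p4 (n : nat) (v : nat -> nat) (L : R) :
  (3 <= n)%nat ->
  (forall i, (1 <= i <= n - 1)%nat -> (0 < v i)%nat) ->
  (forall i, (1 <= i < n - 1)%nat -> (v i < v (S i))%nat) ->
  ML (map v (seq 1 (n - 1))) = L ->
  L > 1 / INR n ->
  forall vn : nat, (0 < vn)%nat ->
    (v (n - 1) * (2 * v (n - 1) - 1) <= vn)%nat ->
    ML (map v (seq 1 (n - 1)) ++ [vn]) >= 1 / INR n.
Proof.
  intros Hn Hpos Hinc HML HL vn Hvn Hbig.
  set (V := v (n - 1)%nat) in *.
  assert (Hmono : forall d i, (i + d = n - 1)%nat -> (1 <= i)%nat -> (v i <= V)%nat).
  { induction d as [|d IH]; intros i Hi H1.
    - unfold V. replace i with (n - 1)%nat by lia. lia.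
    - assert (v i < v (S i))%nat by (apply Hinc; lia).
      assert (v (S i) <= V)%nat by (apply IH; lia). lia. }
  assert (HV2 : (2 <= V)%nat).
  { assert (0 < v (n - 2))%nat by (apply Hpos; lia).
    assert (v (n - 2) < v (S (n - 2)))%nat by (apply Hinc; lia).
    replace (S (n - 2)) with (n - 1)%nat in * by lia. unfold V. lia. }
  set (ws := map v (seq 1 (n - 1))) in *.
  assert (Hin : forall x, In x ws -> exists i, x = v i /\ (1 <= i <= n - 1)%nat).
  { intros x Hx. unfold ws in Hx. apply in_map_iff in Hx. destruct Hx as [i [<- Hi]].
    apply in_seq in Hi. exists i. split; [auto|lia]. }
  assert (HxV : forall x, In x ws -> (0 < x)%nat /\ (x <= V)%nat).
  { intros x Hx. destruct (Hin x Hx) as [i [-> Hi]]. split; [apply Hpos; lia|].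
    apply (Hmono (n - 1 - i)%nat); lia. }
  assert (Hne : ws <> []).
  { assert (In (v 1%nat) ws) by (unfold ws; apply in_map, in_seq; lia).
    intro E; rewrite E in H; contradiction. }
  rewrite <- HML in HL.
  destruct (ML_gt _ _ HL) as [t0 Ht0].
  assert (Rn : 3 <= INR n) by (apply le_INR in Hn; simpl in Hn; lra).
  destruct (core ws n vn t0 Hn Hne) as [t [Ht HtN]].
  - intros x Hx; apply HxV; auto.
  - intros x y Hx Hy Hxy. destruct (HxV x Hx), (HxV y Hy).
    assert (x * y <= V * (V - 1))%nat.
    { destruct (Nat.lt_total x y) as [E|[E|E]]; [|contradiction|].
      - assert (x <= V - 1)%nat by lia. nia.
      - assert (y <= V - 1)%nat by lia. nia. }
    assert (2 * V * (V - 1) <= V * (2 * V - 1))%nat by nia. nia.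
  - intros x Hx. destruct (HxV x Hx). nia.
  - exact Hvn.
  - apply min_dist_gt; auto.
  - eapply Rge_trans; [apply (ML_ge _ t)|]. apply min_dist_ge.
    + apply Rmult_le_reg_r with (INR n); [lra|]. field_simplify; lra.
    + intros x Hx. apply in_app_or in Hx. destruct Hx as [Hx|[<-|[]]]; auto.
Qed.
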